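(* Let $(M,\Sigma)$ be a measurable space, $r\ge1$, $\psi_1,\dots,\psi_r\colon\Sigma\to\mathbb{R}$ non-atomic countably additive charges, and $X\in\Sigma$ a set such that for each $i$ either $\psi_i(A)\ge0$ for all measurable $A\subseteq X$, or $\psi_i(A)\le0$ for all measurable $A\subseteq X$. Let $I^+$ be the set of indices $i$ for which $\psi_i(A)\ge0$ for all measurable $A\subseteq X$ (and $I^-$ the remaining indices, for which $\psi_i\le 0$ on subsets of $X$). If $I^+\neq\emptyset$, then $X$ has a strong solution, i.e. there is a partition $X=F_1\sqcup\dots\sqcup F_r$ into measurable sets with $\psi_i(F_i)\ge\psi_i(F_j)$ for all $i,j$.
   Context: A charge is a countably additive real-valued signed measure; it is non-atomic if the positive and negative parts $\mu^+,\mu^-$ of its Hahn–Jordan decomposition $\psi=\mu^+-\mu^-$ are non-atomic measures. Partition elements may be empty. *)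

(* Defs.v *)
From HB Require Import structures.
From mathcomp Require Import all_boot all_order all_algebra.
From mathcomp Require Import all_classical all_reals all_analysis.
Set Implicit Arguments. Unset Strict Implicit. Unset Printing Implicit Defensive.
Import Order.TTheory GRing.Theory Num.Theory.
Local Open Scope classical_set_scope.
Local Open Scope ring_scope.
Local Open Scope ereal_scope.

Definition measure_atom d (T : measurableType d) (R : realType)
  (mu : {measure set T -> \bar R}) (A : set T) : Prop :=
  [/\ measurable A, 0 < mu A &
      forall B, measurable B -> B `<=` A -> mu B = 0 \/ mu (A `\` B) = 0].

Definition nonatomic_measure d (T : measurableType d) (R : realType)
  (mu : {measure set T -> \bar R}) : Prop :=
  forall A, ~ measure_atom mu A.

(* A (finite, countably additive) charge is non-atomic when the positive and
   negative parts of its Hahn-Jordan decomposition are non-atomic measures.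
   (The Jordan parts do not depend on the choice of Hahn decomposition.) *)
Definition nonatomic_charge d (T : measurableType d) (R : realType)
  (nu : {charge set T -> \bar R}) : Prop :=
  exists P N (nuPN : hahn_decomposition nu P N),
    nonatomic_measure (jordan_pos nuPN) /\ nonatomic_measure (jordan_neg nuPN).

Definition strong_solution d (T : measurableType d) (R : realType) (r : nat)
  (psi : 'I_r -> {charge set T -> \bar R}) (X : set T) : Prop :=
  exists F : 'I_r -> set T,
    [/\ forall i, measurable (F i),
        \bigcup_i F i = X,
        trivIset setT F &
        forall i j, psi i (F j) <= psi i (F i)].

(* Main.v *)
Require Import Defs.
From HB Require Import structures.
From mathcomp Require Import all_boot all_order all_algebra.
From mathcomp Require Import all_classical all_reals all_analysis.
From mathcomp Require Import lra ring zify.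
Import Order.TTheory GRing.Theory Num.Theory.
Import numFieldNormedType.Exports.
Set Implicit Arguments. Unset Strict Implicit. Unset Printing Implicit Defensive.
Local Open Scope classical_set_scope.
Section Good.
Context d (T : measurableType d) (R : realType).
Local Open Scope ring_scope.

Definition good (m : set T -> R) : Prop :=
 [/\ forall A, measurable A -> 0 <= m A,
     forall A B, measurable A -> measurable B -> A `&` B = set0 ->
        m (A `|` B) = m A + m B,
     forall F : nat -> set T, (forall n, measurable (F n)) ->
        (forall n, F n `<=` F n.+1) ->
        (fun n => m (F n)) @ \oo --> m (\bigcup_n F n)
   & forall A, measurable A -> 0 < m A -> exists B,
        [/\ measurable B, B `<=` A, 0 < m B & 0 < m (A `\` B)]].

Lemma lip_cont (f : R -> R) (k : R) : 0 < k ->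
  (forall x y, `|f x - f y| <= k * `|x - y|) -> continuous f.
Proof.
move=> k0 Hf x; apply/cvgrPdist_le => e e0.
apply/nbhs_normP; exists (e / k); first by rewrite /= divr_gt0.
move=> y /= hy; apply: le_trans (Hf x y) _.
by rewrite -ler_pdivlMl // mulrC ltW.
Qed.

Lemma exists_pow2 (x e : R) : 0 < e -> exists n : nat, x / 2 ^+ n < e.
Proof.
move=> e0; have [x0|x0] := leP x 0.
  exists 0%N; rewrite expr0 divr1; exact: le_lt_trans x0 e0.
have hb := archi_boundP (ltW (divr_gt0 x0 e0)).
exists (Num.bound (x / e)).
rewrite ltr_pdivrMr ?exprn_gt0 // -ltr_pdivrMl //.
rewrite mulrC.
apply: lt_le_trans hb _.
rewrite -natrX ler_nat; apply: ltnW; exact: ltn_expl.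
Qed.

Lemma ge_pow2 (a b c : R) : (forall n : nat, b - c / 2 ^+ n <= a) -> b <= a.
Proof.
move=> H; rewrite leNgt; apply/negP => ab.
have ab0 : 0 < b - a by rewrite subr_gt0.
have [n hn] := exists_pow2 c ab0.
have := H n; lra.
Qed.

Section GoodFacts.
Variable m : set T -> R.
Hypothesis hm : good m.

Lemma gm_ge0 {A : set T} : measurable A -> 0 <= m A.
Proof. by case: hm => h _ _ _; apply: h. Qed.

Lemma gmU {A B : set T} : measurable A -> measurable B -> A `&` B = set0 ->
  m (A `|` B) = m A + m B.
Proof. by case: hm => _ h _ _; apply: h. Qed.

Lemma gm0 : m set0 = 0.
Proof.
have := gmU measurable0 measurable0 (setI0 set0).
rewrite setU0 => h; lra.
Qed.

Lemma gmD {A B : set T} : measurable A -> measurable B -> B `<=` A ->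
  m (A `\` B) = m A - m B.
Proof.
move=> mA mB BA; rewrite -{2}(setDUK BA) gmU //; last exact: setDIK.
  lra.
exact: measurableD.
Qed.

Lemma gmle {A B : set T} : measurable A -> measurable B -> B `<=` A -> m B <= m A.
Proof.
move=> mA mB BA; have := gm_ge0 (measurableD mA mB).
by rewrite gmD // subr_ge0.
Qed.

Lemma gm_bigcup_le (F : nat -> set T) c : (forall n, measurable (F n)) ->
  (forall n, F n `<=` F n.+1) -> (forall n, m (F n) <= c) ->
  m (\bigcup_n F n) <= c.
Proof.
move=> mF incF Fc; case: hm => _ _ h _.
apply: (cvgr_to_le (h F mF incF)); near=> n; exact: Fc.
Unshelve. all: by end_near.
Qed.

Lemma gm_nonatomic {A : set T} : measurable A -> 0 < m A -> exists B,
  [/\ measurable B, B `<=` A, 0 < m B & 0 < m (A `\` B)].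
Proof. by case: hm => _ _ _ h; apply: h. Qed.

End GoodFacts.
Arguments gm_ge0 {m} hm {A}.
Arguments gmU {m} hm {A B}.
Arguments gm0 {m} hm.
Arguments gmD {m} hm {A B}.
Arguments gmle {m} hm {A B}.
Arguments gm_bigcup_le {m} hm.
Arguments gm_nonatomic {m} hm {A}.

Lemma good_add (a b : set T -> R) : good a -> good b -> good (fun A => a A + b A).
Proof.
move=> ga gb; split.
- by move=> A mA; rewrite addr_ge0 // (gm_ge0 ga, gm_ge0 gb).
- by move=> A B mA mB AB; rewrite (gmU ga) // (gmU gb) //; lra.
- move=> F mF incF; apply: cvgD.
  + by case: ga => _ _ h _; apply: h.
  + by case: gb => _ _ h _; apply: h.
- move=> A mA; have [a0|a0] := ltP 0 (a A).
  + move=> _; have [B [mB BA B0 AB0]] := gm_nonatomic ga mA a0.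
    exists B; split => //.
      by apply: ltr_pwDl => //; apply: (gm_ge0 gb).
    by apply: ltr_pwDl => //; apply: (gm_ge0 gb) => //; exact: measurableD.
  + have -> : a A = 0 by apply/eqP; rewrite eq_le a0 (gm_ge0 ga).
    rewrite add0r => b0.
    have [B [mB BA B0 AB0]] := gm_nonatomic gb mA b0.
    exists B; split => //.
      by apply: ltr_wpDl => //; apply: (gm_ge0 ga).
    by apply: ltr_wpDl => //; apply: (gm_ge0 ga) => //; exact: measurableD.
Qed.

End Good.

Section Sierp.
Context d (T : measurableType d) (R : realType).
Local Open Scope ring_scope.
Variable a : set T -> R.
Hypothesis ga : good a.

Lemma small_pow A : measurable A -> 0 < a A -> forall n : nat, exists B,
  [/\ measurable B, B `<=` A, 0 < a B & a B * 2 ^+ n <= a A].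
Proof.
move=> mA A0; elim=> [|n [B [mB BA B0 Bn]]].
  by exists A; split => //; rewrite expr0 mulr1.
have [C [mC CB C0 BC0]] := gm_nonatomic ga mB B0.
have mBC := measurableD mB mC.
have eBC : a (B `\` C) = a B - a C by rewrite (gmD ga).
have [h|h] := leP (a C * 2) (a B).
  exists C; split => //; first exact: subset_trans CB BA.
  by rewrite exprS mulrA [a C * 2]mulrC -mulrA; apply: le_trans Bn;
    rewrite mulrA [_ * a C]mulrC ler_wpM2r // exprn_ge0.
exists (B `\` C); split => //.
  by apply: subset_trans BA; apply: subDsetl.
rewrite exprS mulrA; apply: le_trans Bn; rewrite ler_wpM2r ?exprn_ge0 //.
rewrite eBC; lra.
Qed.

Lemma small A : measurable A -> 0 < a A -> forall e, 0 < e -> exists B,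
  [/\ measurable B, B `<=` A, 0 < a B & a B <= e].
Proof.
move=> mA A0 e e0; have [n hn] := exists_pow2 (a A) e0.
have [B [mB BA B0 Bn]] := small_pow mA A0 n.
exists B; split => //; apply: ltW; apply: le_lt_trans hn.
by rewrite ler_pdivlMr // exprn_gt0.
Qed.

Lemma sierp E c : measurable E -> 0 <= c -> c <= a E ->
  exists F, [/\ measurable F, F `<=` E & a F = c].
Proof.
move=> mE c0 cE.
have step : forall F : set T, exists B : set T, (measurable F /\ a F <= c) ->
   [/\ measurable B, B `<=` E `\` F, a B <= c - a F &
     forall B', measurable B' -> B' `<=` E `\` F -> a B' <= c - a F ->
       a B' <= 2 * a B].
  move=> F; have [[mF Fc]|nF] := pselect (measurable F /\ a F <= c); last first.
    by exists set0 => /nF.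
  pose S := [set x | exists B', [/\ measurable B', B' `<=` E `\` F,
                                   a B' <= c - a F & x = a B']].
  have hS : has_sup S.
    split; first by exists 0; exists set0; split => //; rewrite ?(gm0 ga) ?subr_ge0.
    by exists (c - a F) => x [B' [_ _ h ->]].
  have ub := sup_upper_bound hS.
  have [s0|s0] := leP (sup S) 0.
    exists set0 => _; split => //; first by rewrite (gm0 ga) subr_ge0.
    move=> B' mB' B'E B'c; rewrite (gm0 ga) mulr0; apply: le_trans s0.
    by apply: ub; exists B'.
  have s20 : 0 < sup S / 2 by rewrite divr_gt0.
  have [e [B [mB BE Bc eB]] hB] := sup_adherent s20 hS.
  subst e.
  exists B => _; split => // B' mB' B'E B'c.
  have : a B' <= sup S by apply: ub; exists B'.
  move: hB; lra.
have [hh Hh] := choice step.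
pose Fs := fix Fs n := if n is n'.+1 then Fs n' `|` hh (Fs n') else set0.
have FsS n : Fs n.+1 = Fs n `|` hh (Fs n) by [].
have inv n : [/\ measurable (Fs n), Fs n `<=` E & a (Fs n) <= c].
  elim: n => [|n [mF FE Fc]].
    split => //=.
    by rewrite (gm0 ga).
  have [mB BEF Bc _] := Hh (Fs n) (conj mF Fc).
  rewrite FsS; split.
  - exact: measurableU.
  - by move=> x [/FE|/BEF []].
  - rewrite (gmU ga) //; first lra.
    by apply/seteqP; split => // x [Fx /BEF [_ /(_ Fx)]].
have mFs n : measurable (Fs n) by case: (inv n).
have incF n : Fs n `<=` Fs n.+1 by rewrite FsS => x Fx; left.
pose Fi := \bigcup_n Fs n.
have mFi : measurable Fi by apply: bigcupT_measurable.
have FiE : Fi `<=` E by move=> x [n _]; case: (inv n) => _ + _; apply.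
have Fic : a Fi <= c by apply: (gm_bigcup_le ga) => // n; case: (inv n).
exists Fi; split => //; apply/eqP; rewrite eq_le Fic /=.
rewrite leNgt; apply/negP => Fic'.
have mEF := measurableD mE mFi.
have EF0 : 0 < a (E `\` Fi) by rewrite (gmD ga) //; lra.
have cF0 : 0 < c - a Fi by rewrite subr_gt0.
have [B [mB BEF B0 Bc]] := small mEF EF0 cF0.
have big n : a B <= 2 * a (hh (Fs n)).
  have [mF FE Fc] := inv n.
  have [_ _ _ H] := Hh (Fs n) (conj mF Fc).
  apply: H => //.
    by move=> x /BEF [Ex nFx]; split => // Fx; apply: nFx; exists n.
  have : a (Fs n) <= a Fi by apply: (gmle ga) => // x Fx; exists n.
  lra.
have grow n : n%:R * (a B / 2) <= a (Fs n).
  elim: n => [|n IH]; first by rewrite mul0r (gm0 ga).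
  have [mF FE Fc] := inv n.
  have [mB' BEF' _ _] := Hh (Fs n) (conj mF Fc).
  rewrite FsS (gmU ga) //; last first.
    by apply/seteqP; split => // x [Fx /BEF' [_ /(_ Fx)]].
  have -> : n.+1%:R * (a B / 2) = n%:R * (a B / 2) + a B / 2.
    by rewrite -addn1 natrD mulrDl mul1r.
  have := big n; move: IH; set u := n%:R * _; set v := a B; move=> IH.
  lra.
have B20 : 0 < a B / 2 by rewrite divr_gt0.
have hb := archi_boundP (divr_ge0 c0 (ltW B20)).
have := grow (Num.bound (c / (a B / 2))).
case: (inv (Num.bound (c / (a B / 2)))) => _ _ Fc.
move: hb; rewrite ltr_pdivrMr //; lra.
Qed.
End Sierp.
Section Chain.
Context d (T : measurableType d) (R : realType).
Local Open Scope ring_scope.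

Definition chain (l : seq (set T -> R)) (E : set T) (G : R -> set T) :=
  [/\ (forall t, measurable (G t)), (forall t, G t `<=` E),
      (forall s t, s <= t -> G s `<=` G t), G 0 = set0 /\ G 1 = E &
      forall m t, List.In m l -> 0 <= t <= 1 -> m (G t) = t * m E].

Definition halving (l : seq (set T -> R)) :=
  forall E, measurable E -> exists F,
    [/\ measurable F, F `<=` E & forall m, List.In m l -> m F = m E / 2].

Variable l : seq (set T -> R).
Hypothesis gl : forall m, List.In m l -> good m.
Hypothesis hl : halving l.
Variable E : set T.
Hypothesis mE : measurable E.

Lemma chain_of_half : exists G, chain l E G.
Proof.
have step : forall A : set T, exists B, measurable A ->
   [/\ measurable B, B `<=` A & forall m, List.In m l -> m B = m A / 2].
  move=> A; have [mA|nA] := pselect (measurable A); last by exists set0.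
  by have [B hB] := hl mA; exists B.
have [h Hh] := choice step.
pose P := fix P (n j : nat) {struct n} : set T :=
  if n is n'.+1 then
    (if odd j then P n' j./2 `\` h (P n' j./2) else h (P n' j./2))
  else E.
have PS n j : P n.+1 j =
   (if odd j then P n j./2 `\` h (P n j./2) else h (P n j./2)) by [].
have PP n j : [/\ measurable (P n j), P n j `<=` E &
      forall m, List.In m l -> m (P n j) = m E / 2 ^+ n].
  elim: n j => [|n IH] j.
    by split => // m _; rewrite expr0 divr1.
  have [mA AE Am] := IH j./2.
  have [mB BA Bm] := Hh _ mA.
  rewrite PS; case: ifP => _; split.
  - exact: measurableD.
  - by move=> x [/AE].
  - move=> m lm; rewrite (gmD (gl lm)) // Bm // Am // exprS.
    have q0 : (2 ^+ n : R) != 0 by rewrite expf_neq0.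
    field; exact: q0.
  - by [].
  - by move=> x /BA /AE.
  - move=> m lm; rewrite Bm // Am // exprS.
    have q0 : (2 ^+ n : R) != 0 by rewrite expf_neq0.
    field; exact: q0.
have Psplit n j : P n j = P n.+1 j.*2 `|` P n.+1 (j.*2).+1.
  rewrite !PS /= odd_double /= doubleK uphalf_double.
  have [mA _ _] := PP n j; have [_ BA _] := Hh _ mA.
  by rewrite setDUK.
have Pdisj n i j : (i < 2 ^ n)%N -> (j < 2 ^ n)%N -> i != j ->
    P n i `&` P n j = set0.
  elim: n i j => [|n IH] i j.
    by rewrite expn0 !ltnS !leqn0 => /eqP -> /eqP ->; rewrite eqxx.
  move=> ilt jlt ij.
  have [mA _ _] := PP n i./2; have [_ BA _] := Hh _ mA.
  have hi : (i./2 < 2 ^ n)%N by rewrite ltn_half_double -mul2n -expnS.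
  have hj : (j./2 < 2 ^ n)%N by rewrite ltn_half_double -mul2n -expnS.
  have [eh|nh] := eqVneq i./2 j./2.
    have oij : odd i != odd j.
      apply: contra ij => /eqP oij.
      by rewrite -[i]odd_double_half -[j]odd_double_half oij eh.
    rewrite !PS -eh; case: (odd i) oij; case: (odd j) => //= _.
      by rewrite setIC setDIK.
    by rewrite setDIK.
  apply/seteqP; split => // x [].
  have sub k : P n.+1 k `<=` P n k./2.
    have [mk _ _] := PP n k./2; have [_ Bk _] := Hh _ mk.
    by move=> y; rewrite PS; case: ifP => _; [case | apply: Bk].
  move=> /sub Pi /sub Pj.
  by have := IH _ _ hi hj nh; move/seteqP => [+ _] => /(_ x (conj Pi Pj)).
pose V := fix V (n : nat) (t : R) (N : nat) {struct N} : set T :=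
  if N is N'.+1 then
    V n t N' `|` (if N'.+1%:R <= t * 2 ^+ n then P n N' else set0)
  else set0.
have VS n t N : V n t N.+1 =
    V n t N `|` (if N.+1%:R <= t * 2 ^+ n then P n N else set0) by [].
have Vmem n t N x : V n t N x <->
    exists j, [/\ (j < N)%N, j.+1%:R <= t * 2 ^+ n & P n j x].
  elim: N => [|N IH]; first by split => // [[j []]].
  rewrite (VS n t N); split.
  - case => [/IH [j [jN jt Pj]]|]; first by exists j; split => //; exact: ltnW.
    by case: ifP => // Nt PN; exists N.
  - move=> [j [jN jt Pj]]; move: jN; rewrite ltnS leq_eqVlt => /orP [/eqP ej|jN].
      by subst j; right; rewrite jt.
    by left; apply/IH; exists j.
have Vmeas n t N : measurable (V n t N).
  elim: N => [|N IH]; first exact: measurable0.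
  rewrite VS; apply: measurableU => //.
  by case: ifP => // _; case: (PP n N).
have Vm n t N m : List.In m l -> 0 <= t -> (N <= 2 ^ n)%N -> exists k : nat,
    [/\ m (V n t N) * 2 ^+ n = k%:R * m E, (k <= N)%N, k%:R <= t * 2 ^+ n &
        k = N \/ t * 2 ^+ n < k.+1%:R].
  move=> lm t0; have gm := gl lm.
  have q0 : (2 ^+ n : R) != 0 by rewrite expf_neq0.
  elim: N => [|N IH] NS.
    exists 0%N; split => //; last by left.
      by rewrite /= (gm0 gm) !mul0r.
    by rewrite mulr_ge0 // exprn_ge0.
  have [k [Vk kN kt kor]] := IH (ltnW NS).
  rewrite VS; case: ifP => Nt.
  - have kN' : k = N.
      case: kor => // tk; exfalso; move: Nt; rewrite leNgt => /negP; apply.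
      by apply: lt_le_trans tk _; rewrite ler_nat ltnS.
    subst k; exists N.+1; split => //; last by left.
    have [mPN _ PNm] := PP n N.
    have dj : V n t N `&` P n N = set0.
      apply/seteqP; split => // x [/Vmem [j [jN _ Pj]] PN].
      have := Pdisj n j N (ltn_trans jN NS) NS (negbT (ltn_eqF jN)).
      by move/seteqP => [+ _] => /(_ x (conj Pj PN)).
    rewrite (gmU gm (Vmeas n t N) mPN dj) mulrDl Vk PNm //.
    by rewrite divfK // -addn1 natrD mulrDl mul1r.
  - exists k; split => //.
    + by rewrite setU0.
    + exact: leqW.
    + case: kor => [->|]; last by right.
      by right; rewrite ltNge Nt.
have Vinc t n : V n t (2 ^ n)%N `<=` V n.+1 t (2 ^ n.+1)%N.
  move=> x /Vmem [j [jN jt Pj]]; apply/Vmem.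
  have jt' : (j.*2).+2%:R <= t * 2 ^+ n.+1.
    rewrite exprS mulrCA -[_.+2]addn2 -muln2 natrD natrM.
    have -> : (j%:R * 2%:R + 2%:R : R) = 2 * (j.+1)%:R.
      by rewrite -addn1 natrD; ring.
    by rewrite ler_pM2l.
  have jN' : ((j.*2).+1 < 2 ^ n.+1)%N by rewrite expnS mul2n ltn_Sdouble.
  move: Pj; rewrite (Psplit n j) => -[Pj|Pj].
    exists j.*2; split => //; first exact: ltnW.
    by apply: le_trans jt'; rewrite ler_nat.
  by exists (j.*2).+1; split.
pose G t := \bigcup_n V n t (2 ^ n)%N.
exists G; split.
- by move=> t; apply: bigcupT_measurable.
- move=> t x [n _ /Vmem [j [_ _ Pj]]]; by case: (PP n j) => _ + _; apply.
- move=> s t st x [n _ /Vmem [j [jN jt Pj]]]; exists n => //; apply/Vmem.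
  exists j; split => //; apply: le_trans jt _.
  by rewrite ler_wpM2r // exprn_ge0.
- split.
    apply/seteqP; split => // x [n _ /Vmem [j [_ + _]]].
    by rewrite mul0r leNgt ltr0Sn.
  apply/seteqP; split.
    move=> x [n _ /Vmem [j [_ _ Pj]]]; by case: (PP n j) => _ + _; apply.
  move=> x Ex; exists 0%N => //; apply/Vmem; exists 0%N; split => //.
  by rewrite expr0 mulr1.
- move=> m t lm /andP [t0 t1]; have gm := gl lm.
  have q0 n : (0 : R) < 2 ^+ n by rewrite exprn_gt0.
  have mE0 := gm_ge0 gm mE.
  apply/eqP; rewrite eq_le; apply/andP; split.
  + apply: (gm_bigcup_le gm) => // n.
    have [k [Vk kN kt _]] := Vm n t (2 ^ n)%N m lm t0 (leqnn _).
    rewrite -(ler_pM2r (q0 n)) Vk mulrAC.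
    by rewrite ler_wpM2r.
  + apply: (ge_pow2 (c := m E)) => n.
    have [k [Vk kN kt kor]] := Vm n t (2 ^ n)%N m lm t0 (leqnn _).
    have : m (V n t (2 ^ n)%N) <= m (G t).
      by apply: (gmle gm) => //; [apply: bigcupT_measurable | move=> x Vx; exists n].
    apply: le_trans.
    rewrite -(ler_pM2r (q0 n)) Vk mulrBl divfK ?gt_eqF //.
    have -> : t * m E * 2 ^+ n - m E = (t * 2 ^+ n - 1) * m E by ring.
    rewrite ler_wpM2r //.
    case: kor => [ek|]; last by move=> hk; lra.
    subst k; rewrite natrX; have : t * 2 ^+ n <= 2 ^+ n.
      by rewrite -{2}[2 ^+ n]mul1r ler_wpM2r // exprn_ge0.
    lra.
Qed.

End Chain.

Section HalfChain.
Context d (T : measurableType d) (R : realType).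
Local Open Scope ring_scope.

Definition clamp (t : R) := if t < 0 then 0 else if 1 < t then 1 else t.

Lemma clamp01 t : 0 <= clamp t <= 1.
Proof. rewrite /clamp; case: ifP => h0; first lra; case: ifP => h1; lra. Qed.

Lemma clamp_id t : 0 <= t <= 1 -> clamp t = t.
Proof. rewrite /clamp => /andP[h0 h1]; case: ifP => h; first lra; case: ifP => h'; lra. Qed.

Lemma clamp_mono s t : s <= t -> clamp s <= clamp t.
Proof.
rewrite /clamp => st; do !case: ifP => ?; lra.
Qed.

Lemma clamp_lip s t : clamp t - clamp s <= `|t - s|.
Proof.
have := ler_norm (t - s); have := normr_ge0 (t - s).
rewrite /clamp; do !case: ifP => ?; lra.
Qed.

Lemma minmax_half (p w : R) :
  Num.min p (w - p) <= w / 2 <= Num.max p (w - p).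
Proof.
rewrite ge_min le_max.
have [h|h] := leP p (w / 2).
  by apply/andP; split; apply/orP; [left|right]; lra.
by apply/andP; split; apply/orP; [right|left]; lra.
Qed.

Lemma half_of_chain (a b : set T -> R) (s : seq (set T -> R)) :
  good a -> good b -> (forall m, List.In m s -> good m) ->
  (forall E, measurable E -> exists G, chain ((fun A => a A + b A) :: s) E G) ->
  halving (a :: b :: s).
Proof.
move=> ga gb gs hc E mE.
have [G [GM GE Gmono [G0 G1] Gm]] := hc E mE.
pose ab := fun A => a A + b A.
have gab : good ab by apply: good_add.
have lab : List.In ab (ab :: s) by left.
have Gab t : 0 <= t <= 1 -> ab (G t) = t * ab E by move=> ht; apply: Gm.
have key u v : 0 <= u <= 1 -> 0 <= v <= 1 -> u <= v ->
    0 <= a (G v) - a (G u) <= (v - u) * ab E.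
  move=> hu hv uv; have GuGv := Gmono _ _ uv.
  have e1 := gmD ga (GM v) (GM u) GuGv.
  have e2 : ab (G v `\` G u) = v * ab E - u * ab E.
    by rewrite (gmD gab (GM v) (GM u) GuGv) Gab // Gab.
  have := gm_ge0 ga (measurableD (GM v) (GM u)).
  have := gm_ge0 gb (measurableD (GM v) (GM u)).
  move: e1 e2; rewrite /ab /=.
  set X := a _; set Y := b _; set Z := a E + b E.
  have -> : (v - u) * (a E + b E) = v * Z - u * Z by rewrite /Z; ring.
  lra.
pose g t := a (G (clamp t)).
have abE0 : 0 <= ab E by apply: (gm_ge0 gab).
have glip x y : `|g x - g y| <= (ab E + 1) * `|x - y|.
  have cx := clamp01 x; have cy := clamp01 y.
  rewrite [(_ + 1) * _]mulrC /g.
  have [h|h] := leP (clamp y) (clamp x).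
    have /andP [k1 k2] := key _ _ cy cx h.
    have hl := clamp_lip y x.
    rewrite ger0_norm //; apply: le_trans k2 _; apply: ler_pM => //; lra.
  have /andP [k1 k2] := key _ _ cx cy (ltW h).
  have hl := clamp_lip x y; rewrite distrC in hl.
  rewrite ler0_norm ?opprB; last lra.
  apply: le_trans k2 _; apply: ler_pM => //; lra.
pose f t := g (t + 1 / 2) - g t.
have fcont : continuous f.
  apply: (@lip_cont _ f (2 * (ab E + 1))); first lra.
  move=> x y; rewrite /f.
  have h1 := glip (x + 1/2) (y + 1/2); have h2 := glip x y.
  have e : x + 1/2 - (y + 1/2) = x - y by ring.
  rewrite e in h1.
  move: h1 h2; set p := g (x + 1/2); set q := g (y + 1/2).
  set r := g x; set w := g y; set e' := `|x - y|.
  have := ler_normD (p - q) (-(r - w)); rewrite normrN.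
  have -> : p - q + - (r - w) = p - r - (q - w) by ring.
  have : 0 <= ab E + 1 by lra.
  move=> h0 hD h1 h2.
  have -> : 2 * (ab E + 1) * e' = (ab E + 1) * e' + (ab E + 1) * e' by ring.
  lra.
have c12 : clamp (1/2) = 1/2 by rewrite clamp_id //; lra.
have f0 : f 0 = a (G (1/2)).
  by rewrite /f /g add0r c12 clamp_id ?lexx ?ler01 // G0 (gm0 ga) subr0.
have f12 : f (1/2) = a E - a (G (1/2)).
  rewrite /f /g c12.
  have -> : 1 / 2 + 1 / 2 = 1 :> R by field.
  by rewrite clamp_id ?ler01 ?lexx // G1.
have hv : Num.min (f 0) (f (1/2)) <= a E / 2 <= Num.max (f 0) (f (1/2)).
  by rewrite f0 f12; apply: minmax_half.
have h12 : (0:R) <= 1/2 by lra.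
have fc' : {within `[0, 1/2], continuous f} by apply: continuous_subspaceT.
have [c] := IVT h12 fc' hv.
rewrite in_itv /= => /andP [c0 c1] fc.
have hc1 : 0 <= c <= 1 by apply/andP; split => //; apply: le_trans c1 _; rewrite ler_pdivrMr //; rewrite mul1r ler1n.
have hc2 : 0 <= c + 1/2 <= 1.
  apply/andP; split; first by rewrite addr_ge0.
  by rewrite -lerBrDr; apply: le_trans c1 _; rewrite lerBrDr -splitr.
have cc : G c `<=` G (c + 1/2) by apply: Gmono; rewrite lerDl.
pose K := G (c + 1/2) `\` G c.
have mK : measurable K by apply: measurableD.
have lin m : List.In m (ab :: s) -> m K = m E / 2.
  move=> lm; have gm : good m by case: lm => [<-|/gs].
  by rewrite (gmD gm) // Gm // Gm //; field.
exists K; split => //.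
  by move=> x [/GE].
have aK : a K = a E / 2.
  rewrite (gmD ga) // -fc /f /g clamp_id // clamp_id //.
move=> m /= [<-|[<-|lm]] //.
- have := lin ab lab; rewrite /ab aK => h.
  by apply: (addrI (a E / 2)); rewrite h; field.
- by apply: lin; right.
Qed.
End HalfChain.

Section All.
Context d (T : measurableType d) (R : realType).
Local Open Scope ring_scope.

Lemma halving_all (l : seq (set T -> R)) :
  (forall m, List.In m l -> good m) -> halving l.
Proof.
move: {2}(size l) (leqnn (size l)) => n; elim: n l => [|n IH] l.
  by case: l => // _ _ E mE; exists E; split.
case: l => [|a [|b s]] /= hs gl.
- by move=> E mE; exists E; split.
- move=> E mE; have ga : good a by apply: gl; left.
  have aE0 := gm_ge0 ga mE.
  have c0 : 0 <= a E / 2 by rewrite divr_ge0.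
  have cE : a E / 2 <= a E by rewrite ler_pdivrMr // ler_peMr // ler1n.
  have [F [mF FE aF]] := sierp ga mE c0 cE.
  by exists F; split => // m [<-|].
- have ga : good a by apply: gl; left.
  have gb : good b by apply: gl; right; left.
  have gs : forall m, List.In m s -> good m by move=> m lm; apply: gl; right; right.
  apply: half_of_chain => // E mE.
  have gl' : forall m, List.In m ((fun A => a A + b A) :: s) -> good m.
    by move=> m [<-|/gs] //; apply: good_add.
  apply: chain_of_half => //.
  by apply: IH => //.
Qed.

End All.
Section Conv.
Context d (T : measurableType d) (R : realType).
Local Open Scope ring_scope.

Lemma In_map1 (I : eqType) (X : Type) (f : I -> X) (s : seq I) m :
  List.In m (map f s) -> exists2 x, x \in s & m = f x.
Proof.
elim: s => [|y s IH] //= [<-|h]; first by exists y; rewrite ?mem_head.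
have [x xs ->] := IH h.
by exists x => //; rewrite in_cons xs orbT.
Qed.

Lemma In_map2 (I : eqType) (X : Type) (f : I -> X) (s : seq I) x :
  x \in s -> List.In (f x) (map f s).
Proof.
elim: s => [|y s IH] //=; rewrite in_cons => /orP [/eqP ->|xs]; first by left.
by right; apply: IH.
Qed.

Lemma good_of_measure (mu : {measure set T -> \bar R}) :
  (forall A, measurable A -> mu A \is a fin_num) -> nonatomic_measure mu ->
  good (fun A => fine (mu A)).
Proof.
move=> fin na; split.
- by move=> A mA; apply: fine_ge0; apply: measure_ge0.
- move=> A B mA mB AB; rewrite measureU //.
  by rewrite fineD // fin.
- move=> F mF incF.
  have mU : measurable (\bigcup_n F n) by apply: bigcupT_measurable.
  have ndF : nondecreasing_seq F by apply/nondecreasing_seqP => n; rewrite subsetEset; apply: incF.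
  have := @nondecreasing_cvg_mu _ _ _ mu F mF mU ndF.
  rewrite -(fineK (fin _ mU)) => /fine_cvg.
  by apply: cvg_trans; apply: cvg_id.
- move=> A mA A0.
  have muA0 : (0 < mu A)%E by rewrite -(fineK (fin _ mA)) lte_fin.
  have : ~ (forall B, measurable B -> B `<=` A -> mu B = 0 \/ mu (A `\` B) = 0).
    by move=> h; apply: (na A); split.
  move=> /existsNP [B] /not_implyP [mB] /not_implyP [BA] /not_orP [B0 AB0].
  exists B; split => //.
    have := measure_ge0 mu B; rewrite le_eqVlt eq_sym (negbTE (introN eqP B0)) /=.
    by rewrite -(fineK (fin _ mB)) lte_fin.
  have mAB := measurableD mA mB.
  have := measure_ge0 mu (A `\` B); rewrite le_eqVlt eq_sym (negbTE (introN eqP AB0)) /=.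
  by rewrite -(fineK (fin _ mAB)) lte_fin.
Qed.
Lemma charge_split (nu : {charge set T -> \bar R}) : nonatomic_charge nu ->
  exists pn : (set T -> R) * (set T -> R), [/\ good pn.1, good pn.2 &
    forall A, measurable A -> nu A = (pn.1 A - pn.2 A)%:E].
Proof.
move=> [P [N [nuPN [hp hn]]]].
exists (fun A => fine (jordan_pos nuPN A), fun A => fine (jordan_neg nuPN A)).
split => /=.
- by apply: good_of_measure => // A mA; apply: fin_num_measure.
- by apply: good_of_measure => // A mA; apply: fin_num_measure.
- move=> A mA; rewrite (jordan_decomp nuPN mA) /cadd /cscale /=.
  rewrite cscaleN1 /= EFinB.
  rewrite fineK; last by apply: fin_num_measure.
  by rewrite fineK //; apply: fin_num_measure.
Qed.
End Conv.

Unset Implicit Arguments.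
Local Open Scope ring_scope.
Local Open Scope ereal_scope.
Theorem lemma7 (d : measure_display) (T : measurableType d) (R : realType)
  (r : nat) (hr : (1 <= r)%N)
  (psi : 'I_r -> {charge set T -> \bar R})
  (hna : forall i, nonatomic_charge (psi i))
  (X : set T) (mX : measurable X)
  (hsign : forall i,
     (forall A, measurable A -> A `<=` X -> 0 <= psi i A) \/
     (forall A, measurable A -> A `<=` X -> psi i A <= 0))
  (hIpos : exists i, forall A, measurable A -> A `<=` X -> 0 <= psi i A) :
  strong_solution psi X.
Proof.
have [pn Hpn] := choice (fun i => charge_split (hna i)).
pose pp i := (pn i).1; pose nn i := (pn i).2.
pose f := fun x : 'I_r * bool => if x.2 then pp x.1 else nn x.1.
pose l := map f (enum [set: 'I_r * bool]).
have gl : forall m, List.In m l -> good m.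
  move=> m lm; have [[i b] _ ->] := In_map1 lm; rewrite /f /=.
  by case: b; case: (Hpn i).
have lp i : List.In (pp i) l.
  by apply: (@In_map2 _ _ f (enum [set: 'I_r * bool]) (i, true)); rewrite mem_enum in_setT.
have ln i : List.In (nn i) l.
  by apply: (@In_map2 _ _ f (enum [set: 'I_r * bool]) (i, false)); rewrite mem_enum in_setT.
have [G [GM GE Gmono [G0 G1] Gm]] := chain_of_half gl (halving_all gl) mX.
have r0 : (0 < r%:R :> R)%R by rewrite ltr0n.
have t01 k : (k <= r)%N -> (0 <= (k%:R / r%:R : R) <= 1)%R.
  move=> kr; apply/andP; split; first by rewrite divr_ge0.
  by rewrite ler_pdivrMr // mul1r ler_nat.
have mono k k' : (k <= k')%N -> ((k%:R / r%:R : R) <= k'%:R / r%:R)%R.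
  by move=> kk; rewrite ler_pM2r ?invr_gt0 // ler_nat.
pose F (i : 'I_r) := G (i.+1%:R / r%:R)%R `\` G (i%:R / r%:R)%R.
have val m (j : 'I_r) : List.In m l -> m (F j) = (m X / r%:R)%R.
  move=> lm; have gm := gl m lm.
  have ij : (j <= j.+1)%N by [].
  rewrite (gmD gm (GM _) (GM _) (Gmono _ _ (mono _ _ ij))).
  rewrite Gm //; last exact: (t01 _ (ltn_ord j)).
  rewrite Gm //; last exact: (t01 _ (ltnW (ltn_ord j))).
  rewrite -addn1 natrD; field.
  by rewrite pnatr_eq0 -lt0n; apply: leq_trans hr.
have mF i : measurable (F i) by apply: measurableD; apply: GM.
exists F; split => //.
- apply/seteqP; split.
    by move=> x [i _ [Gx _]]; apply: (GE _ x Gx).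
  move=> x Xx.
  have key : forall k, (k <= r)%N -> G (k%:R / r%:R)%R x ->
      exists i : 'I_r, F i x.
    elim=> [|k IH] kr; first by rewrite mul0r G0.
    have [Gk|nGk] := pselect (G (k%:R / r%:R)%R x).
      by move=> _; apply: IH => //; apply: ltnW.
    by move=> Gk1; exists (Ordinal kr); split.
  have [|i Fi] := key r (leqnn r).
    by rewrite divff ?G1 // gt_eqF.
  by exists i.
- move=> i j _ _ [x [[Gi nGi] [Gj nGj]]].
  have [ij|ji|/val_inj //] := ltngtP i j.
    by exfalso; apply: nGj; apply: (Gmono _ _ (mono _ _ ij)).
  by exfalso; apply: nGi; apply: (Gmono _ _ (mono _ _ ji)).
- move=> i j.
  case: (Hpn i) => _ _ E.
  have e k : psi i (F k) = ((pp i X - nn i X) / r%:R)%R%:E.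
    rewrite E //; congr EFin.
    change ((pp i (F k) - nn i (F k))%R = ((pp i X - nn i X) / r%:R)%R).
    rewrite (val (pp i) k (lp i)) (val (nn i) k (ln i)).
    by rewrite mulrBl.
  by rewrite !e.
Qed.
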